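(* Let $\psi$ be a bounded complexity measure, $k\in\omega\setminus\{0,1\}$, $A$ a nontrivial closed class of decision tables from $\mathcal M_k^\infty$, and suppose $\mathcal H^\infty_{\psi,A}$ is everywhere defined. Then $\mathcal H^\infty_{\psi,A}$ is nondecreasing and $\mathcal H^\infty_{\psi,A}(0)=0$. Moreover: (a) if the function $\psi^d$ is bounded from above on $A$, then there is a constant $c\ge 0$ with $\mathcal H^\infty_{\psi,A}(n)\le c$ for all $n\in\omega$; (b) if $\psi^d$ is not bounded from above on $A$, then there exists an infinite subset $D\subseteq\omega$ such that $\mathcal H^\infty_{\psi,A}(n)\ge H_D(n)$ for all $n\in\omega$.
   Context: Notation: $\omega=\{0,1,2,\dots\}$; $\mathcal P(\omega)$ is the set of nonempty finite subsets of $\omega$; for $k\in\omega\setminus\{0,1\}$, $E_k=\{0,1,\dots,k-1\}$. $P=\{f_i:i\in\omega\}$ is a set of attributes, $f_i\neq f_j$ for $i\ne j$. Decision tables: $\mathcal M_k^\infty$ is the set of rectangular tables filled with numbers from $E_k$, whose columns are labeled with pairwise different attributes from $P$, whose rows are pairwise different, and each row of which is labeled with a set from $\mathcal P(\omega)$ (its set of decisions). The empty table (no rows) is denoted $\Lambda$ and belongs to $\mathcal M_k^\infty$. For $T\in\mathcal M_k^\infty$: $\Delta(T)$ is the set of rows; $\Pi(T)$ is the intersection of the decision sets of all rows (common decisions); $\mathcal M_k^{\infty c}$ is the set of tables having at least one common decision, and $\Lambda\in\mathcal M_k^{\infty c}$; $\mathrm{At}(T)$ is the set of attributes labeling columns.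 For nonempty $T$, $\Omega_k(T)$ is the set of finite words (including the empty word $\lambda$) over the alphabet $\{(f_i,\delta):f_i\in\mathrm{At}(T),\delta\in E_k\}$; for $\alpha=(f_{i_1},\delta_1)\cdots(f_{i_m},\delta_m)$, $T\alpha$ is the subtable of $T$ consisting of the rows having value $\delta_j$ in the column $f_{i_j}$ for all $j$, and $T\lambda=T$. Operations: for $D\subseteq\mathrm{At}(T)$, $I(D,T)$ is obtained from $T$ by deleting the columns labeled with attributes from $D$ and, in each group of rows coinciding on the remaining columns, keeping only the first row; $I(\mathrm{At}(T),T)=\Lambda$. For $\nu:E_k^{|\mathrm{At}(T)|}\to\mathcal P(\omega)$, $J(\nu,T)$ is obtained by replacing the decision set of each row $\bar\delta$ by $\nu(\bar\delta)$. $[T]=\{J(\nu,I(D,T)):D\subseteq\mathrm{At}(T),\ \nu:E_k^{|\mathrm{At}(T)\setminus D|}\to\mathcal P(\omega)\}$; for nonempty $A\subseteq\mathcal M_k^\infty$, $[A]=\bigcup_{T\in A}[T]$. $A$ is a closed class if $[A]=A$; it is nontrivial if it contains a nonempty table. Decision trees: a $k$-decision tree is a finite directed rooted tree with at least two nodes in which the root and the edges leaving the root are unlabeled, each terminal node is labeled with a decision from $\omega$, and each other node is labeled with an attribute from $P$, each edge leaving such a node being labeled with a number from $E_k$. $\mathrm{At}(\Gamma)$ is the set of attributes labeling nodes of $\Gamma$. For a complete path $\tau=v_1,d_1,\dots,v_m,d_m,v_{m+1}$ (from the root to a terminal node), $\pi(\tau)=\lambda$ if $m=1$, and otherwise $\pi(\tau)=(f_{i_2},\delta_2)\cdots(f_{i_m},\delta_m)$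 where $v_j$ is labeled $f_{i_j}$ and $d_j$ is labeled $\delta_j$; $T(\tau)=T\pi(\tau)$. For $T\ne\Lambda$, a nondeterministic decision tree for $T$ is a $k$-decision tree $\Gamma$ with $\mathrm{At}(\Gamma)\subseteq\mathrm{At}(T)$ such that every row of $T$ belongs to $T(\tau)$ for some complete path $\tau$, and for every complete path $\tau$ either $T(\tau)=\Lambda$ or the decision at the terminal node of $\tau$ belongs to $\Pi(T(\tau))$. A deterministic decision tree for $T$ is a nondeterministic decision tree for $T$ in which, additionally, exactly one edge leaves the root and the edges leaving any node that is neither the root nor terminal are labeled with pairwise different numbers. Complexity measures: a partially bounded complexity measure is a function $\psi:P^*\to\omega$ on finite words over $P$ such that for all words $\alpha_1,\alpha_2$: $\psi(\alpha_1)=0$ iff $\alpha_1=\lambda$; $\psi(\alpha_1)$ is invariant under permutation of letters; $\psi(\alpha_1)\le\psi(\alpha_1\alpha_2)$; $\psi(\alpha_1\alpha_2)\le\psi(\alpha_1)+\psi(\alpha_2)$. It is bounded if in addition $\psi(\alpha)\ge|\alpha|$ for all $\alpha$. $\psi$ is extended to words $(f_{i_1},\delta_1)\cdots(f_{i_m},\delta_m)$ by $\psi(f_{i_1}\cdots f_{i_m})$. For a $k$-decision tree $\Gamma$, $\psi(\Gamma)=\max_\tau\psi(\pi(\tau))$ over complete paths. For $T\ne\Lambda$, $\psi^d(T)$ (resp. $\psi^a(T)$) is the minimum of $\psi(\Gamma)$ over deterministic (resp. nondeterministic) decision trees $\Gamma$ for $T$; $\psi^d(\Lambda)=\psi^a(\Lambda)=0$.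 $\mathcal H^\infty_{\psi,A}(n)$ is undefined if the set $\{\psi^d(T):T\in A,\ \psi^a(T)\le n\}$ is infinite, and otherwise equals its maximum. For an infinite set $D=\{n_i:i\in\omega\}\subseteq\omega$ with $n_i<n_{i+1}$, $H_D:\omega\to\omega$ is defined by $H_D(n)=0$ if $n<n_0$ and $H_D(n)=n_i$ if $n_i\le n<n_{i+1}$. *)

(* Defs.v *)
From mathcomp Require Import all_boot all_order.
From mathcomp Require Import finmap.
From Stdlib Require Import ClassicalEpsilon.

Set Implicit Arguments.
Unset Strict Implicit.
Unset Printing Implicit Defensive.

Local Open Scope fset_scope.

(* Attributes f_i are represented by their index i : nat; decisions are nats.
   A table: ordered list of column attributes, ordered list of rows; each row
   is (tuple of values, set of decisions). *)
Record table := Table { cols : seq nat ; rows : seq (seq nat * {fset nat}) }.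

Definition Lam : table := Table [::] [::].

Definition wf_table (k : nat) (T : table) : Prop :=
  T = Lam \/
  [/\ cols T != [::], rows T != [::], uniq (cols T), uniq (map fst (rows T)) &
      all (fun r : seq nat * {fset nat} =>
             [&& size r.1 == size (cols T), all (fun v => v < k) r.1 &
                 r.2 != fset0]) (rows T)].

Definition val_at (T : table) (r : seq nat) (f : nat) : nat :=
  nth 0 r (index f (cols T)).

Definition subtable (T : table) (alpha : seq (nat * nat)) : table :=
  let rs := [seq r <- rows T |
              all (fun p : nat * nat => val_at T r.1 p.1 == p.2) alpha] in
  if rs is [::] then Lam else Table (cols T) rs.

Definition in_Pi (d : nat) (T : table) : bool :=
  all (fun r : seq nat * {fset nat} => d \in r.2) (rows T).

Fixpoint keep_first (s : seq (seq nat * {fset nat})) (seen : seq (seq nat))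
  : seq (seq nat * {fset nat}) :=
  match s with
  | [::] => [::]
  | r :: s' => if r.1 \in seen then keep_first s' seen
               else r :: keep_first s' (r.1 :: seen)
  end.

Definition delI (D : seq nat) (T : table) : table :=
  if all (fun c => c \in D) (cols T) then Lam else
  Table [seq c <- cols T | c \notin D]
        (keep_first
           [seq ([seq x.2 | x <- zip (cols T) r.1 & x.1 \notin D], r.2)
           | r <- rows T] [::]).

Definition setJ (nu : seq nat -> {fset nat}) (T : table) : table :=
  Table (cols T) [seq (r.1, nu r.1) | r <- rows T].

Definition in_closure (k : nat) (T T' : table) : Prop :=
  exists (D : seq nat) (nu : seq nat -> {fset nat}),
    [/\ all (fun c => c \in cols T) D,
        (forall v : seq nat,
            size v = size [seq c <- cols T | c \notin D] ->
            all (fun x => x < k) v -> nu v != fset0) &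
        T' = setJ nu (delI D T)].

Definition closed_class (k : nat) (A : table -> Prop) : Prop :=
  (forall T, A T -> wf_table k T) /\
  (forall T', A T' <-> exists T, A T /\ in_closure k T T').

Definition nontrivial (A : table -> Prop) : Prop := exists T, A T /\ T <> Lam.

Inductive dnode := DLeaf of nat | DNode of nat & seq (nat * dnode).
(* A k-decision tree: the unlabelled root with its (unlabelled) outgoing
   edges, i.e. the list of children of the root. *)
Definition dtree := seq dnode.

Fixpoint node_wf (k : nat) (det : bool) (t : dnode) : bool :=
  match t with
  | DLeaf _ => true
  | DNode a ch =>
      [&& 0 < size ch, all (fun e : nat * dnode => e.1 < k) ch,
          (~~ det || uniq (map fst ch)) &
          (fix go (l : seq (nat * dnode)) : bool :=
             match l with
             | [::] => true
             | (_, c) :: l' => node_wf k det c && go l'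
             end) ch]
  end.

Definition tree_wf (k : nat) (det : bool) (G : dtree) : bool :=
  (0 < size G) && all (node_wf k det) G.

Fixpoint node_attrs (t : dnode) : seq nat :=
  match t with
  | DLeaf _ => [::]
  | DNode a ch =>
      a :: (fix go (l : seq (nat * dnode)) : seq nat :=
              match l with
              | [::] => [::]
              | (_, c) :: l' => node_attrs c ++ go l'
              end) ch
  end.

Definition tree_attrs (G : dtree) : seq nat := flatten (map node_attrs G).

Fixpoint node_paths (t : dnode) : seq (seq (nat * nat) * nat) :=
  match t with
  | DLeaf d => [:: ([::], d)]
  | DNode a ch =>
      (fix go (l : seq (nat * dnode)) : seq (seq (nat * nat) * nat) :=
         match l with
         | [::] => [::]
         | (delta, c) :: l' =>
             [seq ((a, delta) :: p.1, p.2) | p <- node_paths c] ++ go l'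
         end) ch
  end.

(* complete paths tau of the tree, as pairs (pi(tau), terminal decision) *)
Definition tree_paths (G : dtree) : seq (seq (nat * nat) * nat) :=
  flatten (map node_paths G).

Definition nondet_tree_for (k : nat) (T : table) (G : dtree) : Prop :=
  [/\ tree_wf k false G,
      all (fun a => a \in cols T) (tree_attrs G),
      (forall r, r \in rows T ->
         exists2 p, p \in tree_paths G & r \in rows (subtable T p.1)) &
      (forall p, p \in tree_paths G ->
         subtable T p.1 = Lam \/ in_Pi p.2 (subtable T p.1))].

Definition det_tree_for (k : nat) (T : table) (G : dtree) : Prop :=
  [/\ nondet_tree_for k T G, size G = 1 & tree_wf k true G].

Definition complexity_measure (psi : seq nat -> nat) : Prop :=
  [/\ (forall a, psi a = 0 <-> a = [::]),
      (forall a b, perm_eq a b -> psi a = psi b),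
      (forall a b, psi a <= psi (a ++ b)) &
      (forall a b, psi (a ++ b) <= psi a + psi b)].

Definition bounded_measure (psi : seq nat -> nat) : Prop :=
  complexity_measure psi /\ (forall a, size a <= psi a).

Definition tree_cost (psi : seq nat -> nat) (G : dtree) : nat :=
  \max_(p <- tree_paths G) psi (map fst p.1).

Definition is_min_cost (psi : seq nat -> nat) (good : dtree -> Prop) (n : nat)
  : Prop :=
  (exists G, good G /\ tree_cost psi G = n) /\
  (forall G, good G -> n <= tree_cost psi G).

Definition psi_d (psi : seq nat -> nat) (k : nat) (T : table) : nat :=
  epsilon (inhabits 0) (fun n =>
    (T = Lam /\ n = 0) \/ (T <> Lam /\ is_min_cost psi (det_tree_for k T) n)).

Definition psi_a (psi : seq nat -> nat) (k : nat) (T : table) : nat :=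
  epsilon (inhabits 0) (fun n =>
    (T = Lam /\ n = 0) \/ (T <> Lam /\ is_min_cost psi (nondet_tree_for k T) n)).

(* H^infty_{psi,A}(n) is defined: the set {psi^d(T) : T in A, psi^a(T) <= n}
   is finite, i.e. bounded *)
Definition H_defined (psi : seq nat -> nat) (k : nat) (A : table -> Prop)
  (n : nat) : Prop :=
  exists b, forall T, A T -> psi_a psi k T <= n -> psi_d psi k T <= b.

Definition H (psi : seq nat -> nat) (k : nat) (A : table -> Prop) (n : nat)
  : nat :=
  epsilon (inhabits 0) (fun m =>
    (exists T, A T /\ psi_a psi k T <= n /\ psi_d psi k T = m) /\
    (forall T, A T -> psi_a psi k T <= n -> psi_d psi k T <= m)).

Definition infinite_nat (D : pred nat) : Prop :=
  forall m, exists n, m < n /\ D n.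

(* H_D(n): 0 if n < min D, else the largest element of D that is <= n *)
Definition H_D (D : pred nat) (n : nat) : nat := \max_(i < n.+1 | D i) i.

(* Main.v *)
Require Import Defs.
From mathcomp Require Import all_boot all_order finmap.
From Stdlib Require Import ClassicalEpsilon.
Set Implicit Arguments.
Unset Strict Implicit.

Lemma node_paths_DNode a ch : node_paths (DNode a ch) =
  flatten [seq [seq ((a, e.1) :: p.1, p.2) | p <- node_paths e.2] | e <- ch].
Proof. by elim: ch => [|[d c] l IH] //=; rewrite -IH. Qed.

Lemma node_attrs_DNode a ch : node_attrs (DNode a ch) =
  a :: flatten [seq node_attrs e.2 | e <- ch].
Proof. elim: ch => [|[d c] l IH] //=. by case: IH => ->. Qed.

Lemma node_wf_DNode k det a ch : node_wf k det (DNode a ch) =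
  [&& 0 < size ch, all (fun e : nat * dnode => e.1 < k) ch,
      (~~ det || uniq (map fst ch)) & all (fun e => node_wf k det e.2) ch].
Proof.
rewrite /=; congr [&& _, _, _ & _].
by elim: ch => [|[d c] l IH] //=; rewrite IH.
Qed.

Lemma mem_enum_fset (A : {fset nat}) x : (x \in enum_fset A) = (x \in A).
Proof. by []. Qed.
Fixpoint build (k : nat) (cs : seq nat) (f : seq (nat * nat) -> nat) : dnode :=
  match cs with
  | [::] => DLeaf (f [::])
  | c :: cs' => DNode c [seq (i, build k cs' (fun w => f ((c, i) :: w))) | i <- iota 0 k]
  end.

Lemma build_wf k det cs f : 0 < k -> node_wf k det (build k cs f).
Proof.
move=> k0; elim: cs f => [|c cs IH] f //.
rewrite [build _ _ _]/= node_wf_DNode size_map size_iota k0 /= -map_comp.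
apply/and3P; split.
- by rewrite all_map; apply/allP => i; rewrite mem_iota.
- by rewrite map_id_in ?iota_uniq ?orbT.
- by rewrite all_map; apply/allP => i _ /=.
Qed.

Lemma build_attrs k cs f a : a \in node_attrs (build k cs f) -> a \in cs.
Proof.
elim: cs f => [|c cs IH] f //.
rewrite [build _ _ _]/= node_attrs_DNode in_cons => /orP [/eqP ->|]; first by rewrite mem_head.
rewrite -map_comp => /flattenP [s] /mapP [i _ ->] /= /IH H.
by rewrite in_cons H orbT.
Qed.

Lemma build_paths1 k cs f p : p \in node_paths (build k cs f) ->
  exists vs, [/\ size vs = size cs, p.1 = zip cs vs & p.2 = f p.1].
Proof.
elim: cs f p => [|c cs IH] f p.
  by rewrite /= inE => /eqP ->; exists [::].
rewrite [build _ _ _]/= node_paths_DNode -map_comp => /flattenP [s] /mapP [i _ ->] /=.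
move/mapP => [q /IH [vs [H1 H2 H3]] ->]; exists (i :: vs) => /=.
by rewrite H1 H2 H3 H2.
Qed.

Lemma build_paths2 k cs f vs : size vs = size cs -> all (fun x => x < k) vs ->
  (zip cs vs, f (zip cs vs)) \in node_paths (build k cs f).
Proof.
elim: cs f vs => [|c cs IH] f [|v vs] //; first by rewrite /= inE.
move=> [Hs] /andP [Hv Hvs]; rewrite [build _ _ _]/= node_paths_DNode.
apply/flattenP; eexists.
  by rewrite -map_comp; apply/mapP; exists v; rewrite // mem_iota.
by apply/mapP; exists (zip cs vs, f ((c, v) :: zip cs vs)); rewrite // (IH (fun w => f ((c,v)::w))).
Qed.
Lemma head_in (A : {fset nat}) : A != fset0 -> head 0 A \in A.
Proof.
rewrite -cardfs_gt0.
have : forall x, (x \in A) = (x \in enum_fset A) by [].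
move=> ->; rewrite /= .
case: (enum_fset A) => //= x s _; exact: mem_head.
Qed.

Definition leafdec (T : table) (q : seq (nat * nat)) : nat :=
  if rows (subtable T q) is r :: _ then head 0 (enum_fset r.2) else 0.

Lemma rows_subtable T q : rows (subtable T q) =
  [seq r <- rows T | all (fun p : nat * nat => val_at T r.1 p.1 == p.2) q].
Proof. by rewrite /subtable; case: [seq _ <- _ | _]. Qed.

Lemma subtable_nil T q : rows (subtable T q) = [::] -> subtable T q = Lam.
Proof. by rewrite rows_subtable /subtable => ->. Qed.

Lemma uniq_fst (s : seq (seq nat * {fset nat})) r r' :
  uniq (map fst s) -> r \in s -> r' \in s -> r.1 = r'.1 -> r = r'.
Proof.
elim: s => [|x s IH] //= /andP [Hx Hu].
rewrite !in_cons => /orP [/eqP ->|Hr] /orP [/eqP ->|Hr'] //.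
- move=> E; case/negP: Hx; rewrite E; exact: map_f.
- move=> E; case/negP: Hx; rewrite -E; exact: map_f.
- exact: IH.
Qed.

Lemma match_self T x : uniq (cols T) -> size x = size (cols T) ->
  all (fun p : nat * nat => val_at T x p.1 == p.2) (zip (cols T) x).
Proof.
move=> Hu Hs; apply/(all_nthP (0,0)) => i; rewrite size_zip Hs minnn => Hi.
by rewrite nth_zip //= /val_at index_uniq.
Qed.

Lemma match_eq T x vs : uniq (cols T) -> size x = size (cols T) ->
  size vs = size (cols T) ->
  all (fun p : nat * nat => val_at T x p.1 == p.2) (zip (cols T) vs) -> x = vs.
Proof.
move=> Hu Hs Hv /(all_nthP (0,0)) H.
apply: (eq_from_nth (x0 := 0)); first by rewrite Hs Hv.
move=> i Hi; have Hi' : i < size (zip (cols T) vs) by rewrite size_zip Hv minnn -Hs.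
move: (H i Hi'); rewrite nth_zip ?Hv //= /val_at index_uniq -?Hs //.
by move/eqP.
Qed.

Lemma det_tree_exists k T : 0 < k -> wf_table k T -> T <> Lam ->
  det_tree_for k T [:: build k (cols T) (leafdec T)].
Proof.
move=> k0 [->//|[Hc Hrn Hu Hfu Hall]] _.
have Hpaths : tree_paths [:: build k (cols T) (leafdec T)] =
   node_paths (build k (cols T) (leafdec T)) by rewrite /tree_paths /= cats0.
have Hwf det : tree_wf k det [:: build k (cols T) (leafdec T)].
  by rewrite /tree_wf /= build_wf.
split=> //; split => //.
- apply/allP => a; rewrite /tree_attrs /= cats0; exact: build_attrs.
- move=> r Hr; rewrite Hpaths.
  have /allP /(_ r Hr) /and3P [Hsz Hlt _] := Hall.
  exists (zip (cols T) r.1, leafdec T (zip (cols T) r.1)).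
    by apply: build_paths2 => //; apply/eqP.
  by rewrite rows_subtable mem_filter /= match_self //; apply/eqP.
- rewrite Hpaths => p /build_paths1 [vs [Hvs -> ->]].
  case E: (rows (subtable T (zip (cols T) vs))) => [|r0 rs].
    by left; apply: subtable_nil.
  right; rewrite /in_Pi /leafdec E; apply/allP => r'.
  rewrite -E => Hr'.
  have Hr0 : r0 \in rows (subtable T (zip (cols T) vs)) by rewrite E mem_head.
  move: Hr' Hr0; rewrite !rows_subtable !mem_filter => /andP [M' I'] /andP [M0 I0].
  have /allP /(_ r' I') /and3P [Hs' _ _] := Hall.
  have /allP /(_ r0 I0) /and3P [Hs0 _ Hne] := Hall.
  have E' := match_eq Hu (eqP Hs') Hvs M'.
  have E0 := match_eq Hu (eqP Hs0) Hvs M0.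
  have -> : r' = r0 by apply: (uniq_fst Hfu I' I0); rewrite E' E0.
  exact: head_in.
Qed.
From Stdlib Require Import Classical.

Lemma min_exists (P : nat -> Prop) n0 : P n0 ->
  exists n, P n /\ forall m, P m -> n <= m.
Proof.
elim/ltn_ind: n0 => n0 IH H0.
case: (classic (exists m, m < n0 /\ P m)) => [[m [Hm Pm]]|N].
  exact: (IH m Hm Pm).
exists n0; split => // m Pm; rewrite leqNgt; apply/negP => Hm; apply: N; by exists m.
Qed.

Lemma min_cost_exists psi good : (exists G, good G) -> exists n, is_min_cost psi good n.
Proof.
move=> [G HG].
have [n [[G' [HG' E]] Hmin]] := @min_exists (fun n => exists G, good G /\ tree_cost psi G = n) _ (ex_intro _ G (conj HG erefl)).
exists n; split; first by exists G'.
by move=> G2 H2; apply: Hmin; exists G2.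
Qed.

Lemma psi_d_Lam psi k : psi_d psi k Lam = 0.
Proof.
rewrite /psi_d; case: (epsilon_spec (inhabits 0) (fun n => (Lam = Lam /\ n = 0) \/ (Lam <> Lam /\ is_min_cost psi (det_tree_for k Lam) n))) => [|[_ ->]|[]] //.
by exists 0; left.
Qed.

Lemma psi_a_Lam psi k : psi_a psi k Lam = 0.
Proof.
rewrite /psi_a; case: (epsilon_spec (inhabits 0) (fun n => (Lam = Lam /\ n = 0) \/ (Lam <> Lam /\ is_min_cost psi (nondet_tree_for k Lam) n))) => [|[_ ->]|[]] //.
by exists 0; left.
Qed.

Lemma psi_d_spec psi k T : T <> Lam -> (exists G, det_tree_for k T G) ->
  is_min_cost psi (det_tree_for k T) (psi_d psi k T).
Proof.
move=> NL /(min_cost_exists psi) [n Hn].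
rewrite /psi_d; case: (epsilon_spec (inhabits 0) (fun n => (T = Lam /\ n = 0) \/ (T <> Lam /\ is_min_cost psi (det_tree_for k T) n))) => [|[]|[]] //.
by exists n; right.
Qed.

Lemma psi_a_spec psi k T : T <> Lam -> (exists G, nondet_tree_for k T G) ->
  is_min_cost psi (nondet_tree_for k T) (psi_a psi k T).
Proof.
move=> NL /(min_cost_exists psi) [n Hn].
rewrite /psi_a; case: (epsilon_spec (inhabits 0) (fun n => (T = Lam /\ n = 0) \/ (T <> Lam /\ is_min_cost psi (nondet_tree_for k T) n))) => [|[]|[]] //.
by exists n; right.
Qed.

Lemma psi_a_le_d psi k T : 0 < k -> wf_table k T -> psi_a psi k T <= psi_d psi k T.
Proof.
move=> k0 W; case: (classic (T = Lam)) => [->|NL].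
  by rewrite psi_a_Lam.
have Hd := det_tree_exists k0 W NL.
have [[G [[HG _ _] <-]] _] := psi_d_spec psi NL (ex_intro _ _ Hd).
have [_ Hmin] := psi_a_spec psi NL (ex_intro _ _ (let: And3 h _ _ := Hd in h)).
exact: Hmin.
Qed.
Lemma subtable_nil_word T : rows T != [::] -> subtable T [::] = T.
Proof.
case: T => c r /= Hr; rewrite /subtable /=.
have -> : [seq x <- r | true] = r by elim: r {Hr} => //= x r ->.
by case: r Hr.
Qed.

Local Open Scope fset_scope.

Theorem theorem2 (psi : seq nat -> nat) (k : nat) (A : table -> Prop) :
  bounded_measure psi -> 1 < k -> closed_class k A -> nontrivial A ->
  (forall n, H_defined psi k A n) ->
  [/\ (forall m n, m <= n -> H psi k A m <= H psi k A n),
      H psi k A 0 = 0,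
      ((exists c, forall T, A T -> psi_d psi k T <= c) ->
         exists c, forall n, H psi k A n <= c) &
      (~ (exists c, forall T, A T -> psi_d psi k T <= c) ->
         exists D : pred nat, infinite_nat D /\
           forall n, H_D D n <= H psi k A n)].
Proof.
move=> [[Hpsi0 _ _ _] _] Hk [Hwf Hcl] [T0 [AT0 NT0]] Hdef.
have k0 : 0 < k by apply: ltnW.
have ALam : A Lam.
  apply/Hcl; exists T0; split => //; exists (cols T0), (fun _ => [fset 0]); split.
  - by apply/allP.
  - by move=> v _ _; apply/fset0Pn; exists 0; rewrite inE.
  - by rewrite /delI; have -> : all (fun c => c \in cols T0) (cols T0) by apply/allP.
have Hspec : forall n,
  (exists T, A T /\ psi_a psi k T <= n /\ psi_d psi k T = H psi k A n) /\
  (forall T, A T -> psi_a psi k T <= n -> psi_d psi k T <= H psi k A n).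
  move=> n; rewrite /H; apply: (epsilon_spec (inhabits 0) (fun m =>
    (exists T, A T /\ psi_a psi k T <= n /\ psi_d psi k T = m) /\
    (forall T, A T -> psi_a psi k T <= n -> psi_d psi k T <= m))).
  have [b Hb] := Hdef n.
  have [m [Pm Hmin]] := @min_exists (fun m => forall T, A T -> psi_a psi k T <= n -> psi_d psi k T <= m) b Hb.
  exists m; split => //.
  case: m Pm Hmin => [|m] Pm Hmin.
    by exists Lam; rewrite psi_a_Lam psi_d_Lam.
  case: (classic (exists T, A T /\ psi_a psi k T <= n /\ m < psi_d psi k T)) => [[T [AT [Ha Hd]]]|N].
    exists T; split => //; split => //; apply/eqP; rewrite eqn_leq Hd Pm //.
  have : m.+1 <= m.
    apply: Hmin => T AT Ha; rewrite leqNgt; apply/negP => Hd; apply: N; by exists T.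
  by rewrite ltnn.
split.
- move=> m n Hmn; have [[T [AT [Ha <-]]] _] := Hspec m.
  apply: (proj2 (Hspec n)) => //; exact: leq_trans Ha Hmn.
- have [[T [AT [Ha <-]]] _] := Hspec 0.
  case: (classic (T = Lam)) => [->|NL]; first by rewrite psi_d_Lam.
  have W := Hwf T AT.
  have Hd := det_tree_exists k0 W NL.
  have [[G [[HGwf HGat HGcov HGdec] HGc]] _] := psi_a_spec psi NL (ex_intro _ _ (let: And3 h _ _ := Hd in h)).
  have Hrn : rows T != [::] by case: W => [//|[]].
  case Er: (rows T) Hrn => [//|r0 rs] _.
  have Hr0in : r0 \in rows T by rewrite Er mem_head.
  have [p Hp Hr0] := HGcov r0 Hr0in.
  have Hp0 : psi (map fst p.1) = 0.
    apply/eqP; rewrite -leqn0; apply: leq_trans Ha; rewrite -HGc.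
    exact: (leq_bigmax_seq (F := fun p : seq (nat * nat) * nat => psi (map fst p.1))).
  have Hp1 : p.1 = [::] by case: (p.1) (proj1 (Hpsi0 _) Hp0).
  have HTT : subtable T [::] = T by apply: subtable_nil_word; rewrite Er.
  have Hpi : in_Pi p.2 T.
    by case: (HGdec p Hp); rewrite Hp1 HTT.
  have Hleaf : det_tree_for k T [:: DLeaf p.2].
    split => //; split => //.
    - move=> r Hr; exists ([::], p.2); first by rewrite /tree_paths /= inE.
      by rewrite HTT.
    - by move=> q; rewrite /tree_paths /= inE => /eqP -> /=; rewrite HTT; right.
  have [_ Hmin] := psi_d_spec psi NL (ex_intro _ _ Hleaf).
  apply/eqP; rewrite -leqn0; apply: leq_trans (Hmin _ Hleaf) _.
  by rewrite /tree_cost /tree_paths /= big_cons big_nil /= (proj2 (Hpsi0 [::])).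
- move=> [c Hc]; exists c => n.
  have [[T [AT [_ <-]]] _] := Hspec n; exact: Hc.
- move=> NB.
  exists (fun d => if excluded_middle_informative (exists T, A T /\ psi_d psi k T = d) then true else false).
  split.
  + move=> m.
    case: (classic (exists T, A T /\ m < psi_d psi k T)) => [[T [AT HT]]|N].
      exists (psi_d psi k T); split => //.
      by case: excluded_middle_informative => // [[]]; exists T.
    exfalso; apply: NB; exists m => T AT; rewrite leqNgt; apply/negP => H1; apply: N; by exists T.
  + move=> n; rewrite /H_D; apply/bigmax_leqP => i.
    case: excluded_middle_informative => // [[T [AT E]]] _.
    rewrite -E; apply: (proj2 (Hspec n)) => //.
    apply: leq_trans (psi_a_le_d psi k0 (Hwf T AT)) _.
    by rewrite E -ltnS ltn_ord.
Qed.
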